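(* Let $r\ge 3$ and let $F(x,y)=(f(x,y),x,y)$ be a germ at $o=(0,0)$ of a $C^r$ map into $\mathbf{R}^3_1$ with $f(0,0)=0$, $f_x(0,0)=0$, $f_y(0,0)=1$, such that $\{B_F\neq0\}$ is open and dense in the domain and $A_F-\varphi B_F^2\equiv0$ for some $C^{r-2}$ function germ $\varphi$ at $o$. Suppose that $o$ is a non-degenerate light-like point, i.e. $\nabla B_F(o)\neq(0,0)$. Then the Gaussian curvature $K=-C_F/B_F^2$ of $F$ diverges to $+\infty$ at $o$, i.e. $K(p)\to+\infty$ as $p\to o$ with $B_F(p)\neq0$.
   Context: $\mathbf{R}^3_1$ is Lorentz–Minkowski 3-space with coordinates $(t,x,y)$ and inner product $-dt^2+dx^2+dy^2$. $B_F:=1-f_x^2-f_y^2$, $A_F:=(1-f_x^2)f_{yy}+2f_xf_yf_{xy}+(1-f_y^2)f_{xx}$, $C_F:=f_{xx}f_{yy}-f_{xy}^2$; the Gaussian curvature of $F$ at points where $B_F\ne0$ is $K=-C_F/B_F^2$. *)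

(* Defs.v *)
From Stdlib Require Import Reals.
From Coquelicot Require Import Coquelicot.
Open Scope R_scope.

Definition dx (g : R -> R -> R) : R -> R -> R :=
  fun x y => Derive (fun t => g t y) x.
Definition dy (g : R -> R -> R) : R -> R -> R :=
  fun x y => Derive (fun t => g x t) y.

Definition continuous2 (g : R -> R -> R) (x y : R) : Prop :=
  filterlim (fun p : R * R => g (fst p) (snd p)) (locally (x, y)) (locally (g x y)).

Fixpoint Ck (k : nat) (U : R -> R -> Prop) (g : R -> R -> R) : Prop :=
  match k with
  | O => forall x y, U x y -> continuous2 g x y
  | S k' =>
      (forall x y, U x y ->
         ex_derive (fun t => g t y) x /\ ex_derive (fun t => g x t) y)
      /\ (forall x y, U x y -> continuous2 g x y)
      /\ Ck k' U (dx g) /\ Ck k' U (dy g)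
  end.

Definition open2 (U : R -> R -> Prop) : Prop :=
  forall x y, U x y -> exists eps, 0 < eps /\
    forall x' y', Rabs (x' - x) < eps -> Rabs (y' - y) < eps -> U x' y'.

(* B_F, A_F, C_F for F(x,y) = (f(x,y), x, y). *)
Definition B_F (f : R -> R -> R) : R -> R -> R :=
  fun x y => 1 - (dx f x y)^2 - (dy f x y)^2.
Definition A_F (f : R -> R -> R) : R -> R -> R :=
  fun x y => (1 - (dx f x y)^2) * dy (dy f) x y
             + 2 * dx f x y * dy f x y * dy (dx f) x y
             + (1 - (dy f x y)^2) * dx (dx f) x y.
Definition C_F (f : R -> R -> R) : R -> R -> R :=
  fun x y => dx (dx f) x y * dy (dy f) x y - (dy (dx f) x y)^2.
(* Gaussian curvature (meaningful where B_F <> 0). *)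
Definition K_F (f : R -> R -> R) : R -> R -> R :=
  fun x y => - C_F f x y / (B_F f x y)^2.

(* Main.v *)
Require Import Defs.
From Stdlib Require Import Reals Lra Lia Psatz.
From Coquelicot Require Import Coquelicot.
Open Scope R_scope.

Lemma Ck_cont k U g : Ck k U g -> forall x y, U x y -> continuity_2d_pt g x y.
Proof.
  destruct k; simpl; intros H x y Hu; apply continuity_2d_pt_filterlim.
  - now apply H.
  - now apply H.
Qed.

Lemma cont_sq g x y : continuity_2d_pt g x y -> continuity_2d_pt (fun u v => (g u v)^2) x y.
Proof.
  intros H. apply continuity_2d_pt_ext with (fun u v => g u v * g u v).
  - intros; simpl; ring.
  - now apply continuity_2d_pt_mult.
Qed.

Lemma Derive_B (g h : R -> R) x : ex_derive g x -> ex_derive h x ->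
  Derive (fun t => 1 - (g t)^2 - (h t)^2) x = -(2 * Derive g x * g x) - 2 * Derive h x * h x.
Proof.
  intros Hg Hh. apply is_derive_unique. auto_derive.
  - tauto.
  - change (fun x0 : R => g x0) with g. change (fun x0 : R => h x0) with h. ring.
Qed.

Theorem proposition3p8 (r : nat) (U : R -> R -> Prop) (f phi : R -> R -> R) :
  (3 <= r)%nat ->
  open2 U -> U 0 0 ->
  Ck r U f ->
  f 0 0 = 0 -> dx f 0 0 = 0 -> dy f 0 0 = 1 ->
  (forall x y, U x y -> forall eps, 0 < eps ->
     exists x' y', U x' y' /\ Rabs (x' - x) < eps /\ Rabs (y' - y) < eps
                   /\ B_F f x' y' <> 0) ->
  Ck (r - 2) U phi ->
  (forall x y, U x y -> A_F f x y - phi x y * (B_F f x y)^2 = 0) ->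
  (dx (B_F f) 0 0 <> 0 \/ dy (B_F f) 0 0 <> 0) ->
  forall M : R, exists delta, 0 < delta /\
    forall x y, U x y -> Rabs x < delta -> Rabs y < delta -> B_F f x y <> 0 ->
      M < K_F f x y.
Proof.
  intros Hr HU H0 Hf Hf0 Hfx Hfy _ _ HA HB M.
  destruct r as [|[|[|k]]]; try lia.
  destruct Hf as [Hfex [Hfc [Hdx Hdy]]].
  destruct Hdx as [Hdxex [Hdxc [Hdxdx Hdydx]]].
  destruct Hdy as [Hdyex [Hdyc [Hdxdy Hdydy]]].
  assert (Hyy : dy (dy f) 0 0 = 0).
  { specialize (HA 0 0 H0). unfold A_F, B_F in HA. rewrite Hfx, Hfy in HA. nra. }
  assert (HBx : dx (B_F f) 0 0 = -(2 * dx (dx f) 0 0 * dx f 0 0) - 2 * dx (dy f) 0 0 * dy f 0 0).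
  { apply (Derive_B (fun t => dx f t 0) (fun t => dy f t 0) 0).
    - apply (Hdxex 0 0 H0). - apply (Hdyex 0 0 H0). }
  assert (HBy : dy (B_F f) 0 0 = -(2 * dy (dx f) 0 0 * dx f 0 0) - 2 * dy (dy f) 0 0 * dy f 0 0).
  { apply (Derive_B (fun t => dx f 0 t) (fun t => dy f 0 t) 0).
    - apply (Hdxex 0 0 H0). - apply (Hdyex 0 0 H0). }
  assert (Hsch : dx (dy f) 0 0 = dy (dx f) 0 0).
  { destruct (HU 0 0 H0) as [e [He Hbox]].
    apply (Schwarz f 0 0).
    - exists (mkposreal e He). intros u v Hu Hv. simpl in Hu, Hv.
      pose proof (Hbox u v Hu Hv) as Huv.
      split; [apply (Hfex u v Huv)|].
      split; [apply (Hfex u v Huv)|].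
      split; [apply (Hdyex u v Huv)|apply (Hdxex u v Huv)].
    - exact (Ck_cont _ _ _ Hdxdy 0 0 H0).
    - exact (Ck_cont _ _ _ Hdydx 0 0 H0). }
  set (a := dy (dx f) 0 0) in *.
  assert (Ha : a <> 0).
  { destruct HB as [HB|HB].
    - rewrite HBx, Hfx, Hfy, Hsch in HB. intro E; apply HB. rewrite E. ring.
    - rewrite HBy, Hfx, Hfy, Hyy in HB. lra. }
  assert (Ha2 : 0 < a^2) by (apply pow2_gt_0 in Ha; lra).
  assert (HcB : continuity_2d_pt (B_F f) 0 0).
  { unfold B_F. apply continuity_2d_pt_minus; [apply continuity_2d_pt_minus|].
    - apply continuity_2d_pt_const.
    - apply cont_sq. apply continuity_2d_pt_filterlim; exact (Hdxc 0 0 H0).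
    - apply cont_sq. apply continuity_2d_pt_filterlim; exact (Hdyc 0 0 H0). }
  assert (HcC : continuity_2d_pt (C_F f) 0 0).
  { unfold C_F. apply continuity_2d_pt_minus.
    - apply continuity_2d_pt_mult.
      + exact (Ck_cont _ _ _ Hdxdx 0 0 H0).
      + exact (Ck_cont _ _ _ Hdydy 0 0 H0).
    - apply cont_sq. exact (Ck_cont _ _ _ Hdydx 0 0 H0). }
  assert (HB0 : B_F f 0 0 = 0).
  { unfold B_F. rewrite Hfx, Hfy. ring. }
  assert (HC0 : C_F f 0 0 = - a^2).
  { unfold C_F. rewrite Hyy. fold a. ring. }
  assert (Hm : 0 < Rabs M + 1) by (pose proof (Rabs_pos M); lra).
  set (e := Rmin 1 (a^2 / (2 * (Rabs M + 1)))).
  assert (He : 0 < e).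
  { unfold e. apply Rmin_glb_lt; [lra|]. apply Rdiv_lt_0_compat; lra. }
  destruct (HcC (mkposreal (a^2/2) ltac:(lra))) as [d1 Hd1].
  destruct (HcB (mkposreal e He)) as [d2 Hd2].
  exists (Rmin d1 d2). split.
  { apply Rmin_glb_lt; apply cond_pos. }
  intros x y Hu Hx Hy Hb.
  assert (Hx1 : Rabs (x - 0) < d1) by (rewrite Rminus_0_r; eapply Rlt_le_trans; [exact Hx| apply Rmin_l]).
  assert (Hy1 : Rabs (y - 0) < d1) by (rewrite Rminus_0_r; eapply Rlt_le_trans; [exact Hy| apply Rmin_l]).
  assert (Hx2 : Rabs (x - 0) < d2) by (rewrite Rminus_0_r; eapply Rlt_le_trans; [exact Hx| apply Rmin_r]).
  assert (Hy2 : Rabs (y - 0) < d2) by (rewrite Rminus_0_r; eapply Rlt_le_trans; [exact Hy| apply Rmin_r]).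
  specialize (Hd1 x y Hx1 Hy1). specialize (Hd2 x y Hx2 Hy2).
  simpl in Hd1, Hd2. rewrite HC0 in Hd1. rewrite HB0, Rminus_0_r in Hd2.
  set (c := C_F f x y) in *. set (b := B_F f x y) in *.
  assert (Hc : c < - (a^2/2)).
  { apply Rabs_def2 in Hd1. lra. }
  assert (He1 : e <= 1) by apply Rmin_l.
  assert (He2 : e <= a^2 / (2 * (Rabs M + 1))) by apply Rmin_r.
  assert (Hb2 : b^2 < a^2 / (2 * (Rabs M + 1))).
  { assert (b^2 = Rabs b * Rabs b) by (rewrite <- Rabs_mult, Rabs_right; [ring| nra]).
    pose proof (Rabs_pos b). nra. }
  assert (Hbp : 0 < b^2) by (apply pow2_gt_0 in Hb; lra).
  assert (Hb3 : b^2 * (Rabs M + 1) < a^2/2).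
  { apply Rmult_lt_compat_r with (r := Rabs M + 1) in Hb2; [|lra].
    replace (a ^ 2 / (2 * (Rabs M + 1)) * (Rabs M + 1)) with (a^2/2) in Hb2 by (field; lra).
    lra. }
  unfold K_F. fold c b.
  assert (Hq : b^2 * / b^2 = 1) by (field; lra).
  assert (Hqp : 0 < / b^2) by (apply Rinv_0_lt_compat; lra).
  pose proof (Rle_abs M).
  unfold Rdiv.
  assert (- c * / b^2 > (Rabs M + 1)).
  { assert (-c > b^2 * (Rabs M + 1)) by lra.
    apply Rmult_gt_compat_r with (r := / b^2) in H1; [|lra].
    replace (b ^ 2 * (Rabs M + 1) * / b ^ 2) with (Rabs M + 1) in H1 by (field; lra).
    exact H1. }
  lra.
Qed.
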